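(* Let $A\in\mathbb{R}^{n\times n}$ and $b\in\mathbb{R}^n$, and consider the generalized Newton method $x^{k+1}=(A-D(x^k))^{-1}b$ for the equation $Ax-|x|=b$. (a) If $A-I$ is a nonsingular $M$-matrix, then for every $x^0\in\mathbb{R}^n$ the iteration is well defined for all $k$, the equation has a unique solution $x^*$, and $x^k=x^*$ for all $k\ge n+2$. (b) If $A-I$ is an irreducible singular $M$-matrix, $v>0$ is a vector with $(A^T-I)v=0$, and $v^Tb<0$, then for every $x^0$ with $D(x^0)\neq I$ (i.e. $x^0$ has at least one nonpositive component) the iteration is well defined for all $k$, the equation has a unique solution $x^*$, and $x^k=x^*$ for all $k\ge n+1$.
   Context: For $x\in\mathbb{R}^n$, $|x|$ is the componentwise absolute value, $\mathrm{sign}(x)$ is the vector whose components are $1,0,-1$ according as the corresponding component of $x$ is positive, zero, negative, and $D(x)=\mathrm{diag}(\mathrm{sign}(x))$. A $Z$-matrix is a real square matrix whose off-diagonal entries are all nonpositive; any $Z$-matrix can be written $sI-B$ with $B\ge 0$ entrywise, and it is a nonsingular $M$-matrix if $s>\rho(B)$ and a singular $M$-matrix if $s=\rho(B)$, where $\rho$ is spectral radius. A square matrix $M$ is reducible if there is a permutation matrix $P$ with $P^TMP=\begin{bmatrix}M_{11}&M_{12}\\0&M_{22}\end{bmatrix}$ where $M_{11},M_{22}$ are square (nonempty) blocks; it is irreducible otherwise. If $A-I$ is an irreducible singular $M$-matrix, a vector $v>0$ with $(A^T-I)v=0$ exists and is unique up to a positive scalar multiple. *)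

(* Defs.v *)
From HB Require Import structures.
From mathcomp Require Import all_boot all_order all_fingroup all_algebra.
From mathcomp Require Import reals complex.
Set Implicit Arguments. Unset Strict Implicit. Unset Printing Implicit Defensive.
Import Order.TTheory GRing.Theory Num.Theory.
Local Open Scope ring_scope.

Section Defs.
Variables (R : realType) (n : nat).

Definition absv (x : 'cV[R]_n) : 'cV[R]_n := map_mx (fun a => `|a|) x.

Definition Dsign (x : 'cV[R]_n) : 'M[R]_n := diag_mx (\row_i Num.sg (x i 0)).

Definition nonneg_mx (B : 'M[R]_n) : Prop := forall i j, 0 <= B i j.

Definition ceigenvalue (B : 'M[R]_n) (lam : R[i]) : Prop :=
  root (char_poly (map_mx (fun a => real_complex R a) B)) lam.

Definition gt_spectral_radius (s : R) (B : 'M[R]_n) : Prop :=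
  forall lam, ceigenvalue B lam -> Normc.normc lam < s.

Definition eq_spectral_radius (s : R) (B : 'M[R]_n) : Prop :=
  (forall lam, ceigenvalue B lam -> Normc.normc lam <= s) /\
  (exists lam, ceigenvalue B lam /\ Normc.normc lam = s).

Definition Zmatrix (M : 'M[R]_n) : Prop := forall i j, i != j -> M i j <= 0.

Definition nonsingular_Mmatrix (M : 'M[R]_n) : Prop :=
  Zmatrix M /\ exists (s : R) (B : 'M[R]_n),
    nonneg_mx B /\ M = s%:M - B /\ gt_spectral_radius s B.

Definition singular_Mmatrix (M : 'M[R]_n) : Prop :=
  Zmatrix M /\ exists (s : R) (B : 'M[R]_n),
    nonneg_mx B /\ M = s%:M - B /\ eq_spectral_radius s B.

(* reducible: P^T M P = [[M11, M12], [0, M22]] with M11 of size k, 0 < k < n *)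
Definition reducible (M : 'M[R]_n) : Prop :=
  exists (s : 'S_n) (k : nat), (0 < k < n)%N /\
    forall i j : 'I_n, (k <= i)%N -> (j < k)%N ->
      ((perm_mx s)^T *m M *m perm_mx s) i j = 0.

Definition irreducible (M : 'M[R]_n) : Prop := ~ reducible M.

Fixpoint gnewton (A : 'M[R]_n) (b : 'cV[R]_n) (x0 : 'cV[R]_n) (k : nat)
  : 'cV[R]_n :=
  match k with
  | 0 => x0
  | k'.+1 => invmx (A - Dsign (gnewton A b x0 k')) *m b
  end.

Definition gnewton_well_defined (A : 'M[R]_n) (b x0 : 'cV[R]_n) : Prop :=
  forall k, (A - Dsign (gnewton A b x0 k)) \in unitmx.

Definition is_AVE_solution (A : 'M[R]_n) (b x : 'cV[R]_n) : Prop :=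
  A *m x - absv x = b.

End Defs.

(* Main.v *)
Require Import Defs.
From HB Require Import structures.
From mathcomp Require Import all_boot all_order all_fingroup all_algebra.
From mathcomp Require Import reals complex.
From mathcomp Require Import boolp.
From mathcomp Require classical_sets.
From mathcomp.algebra_tactics Require Import ring lra.
From mathcomp Require Import zify.
Import Order.TTheory GRing.Theory Num.Theory.
Local Open Scope ring_scope.
Set Implicit Arguments. Unset Strict Implicit.

Lemma exists_min (R : realType) (I : finType) (f : I -> R) (i0 : I) :
  exists j, forall k, f j <= f k.
Proof.
case: (@Order.TotalTheory.arg_minP _ R I i0 xpredT f) => // j _ H.
by exists j => k; apply: H.
Qed.

Lemma zmx_pos (R : realType) (n : nat) (W : 'M[R]_n) (u : 'cV[R]_n) :
  Zmatrix W -> (forall i, 0 < u i 0) -> (forall i, 0 <= (W *m u) i 0) ->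
  (forall J : {set 'I_n}, J != set0 ->
     (forall i, i \in J -> (W *m u) i 0 = 0 /\ forall j, j \notin J -> W i j = 0) -> False) ->
  forall x : 'cV[R]_n, (forall i, 0 <= (W *m x) i 0) -> forall i, 0 <= x i 0.
Proof.
move=> Z up Wu Hirr x Wx i.
rewrite leNgt; apply/negP => xi.
have [m Hm] := @exists_min R _ (fun j => x j 0 / u j 0) i.
set c := x m 0 / u m 0.
have cneg : c < 0.
  apply: (le_lt_trans (Hm i)); rewrite pmulr_llt0 // invr_gt0; exact: up.
have xge : forall j, c * u j 0 <= x j 0.
  by move=> j; rewrite -ler_pdivlMr //; apply: Hm.
apply: (Hirr [set j | x j 0 == c * u j 0]).
  apply/set0Pn; exists m; rewrite inE /c divfK //; exact: lt0r_neq0.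
move=> j; rewrite inE => /eqP xj.
pose T k := W j k * (x k 0 - c * u k 0).
have Tle : forall k, T k <= 0.
  move=> k; rewrite /T; have [->|kj] := eqVneq k j.
    by rewrite xj subrr mulr0.
  by apply: mulr_le0_ge0; [apply: Z; rewrite eq_sym | rewrite subr_ge0].
have sumT : \sum_k T k = (W *m x) j 0 - c * (W *m u) j 0.
  rewrite !mxE mulr_sumr -sumrB; apply: eq_bigr => k _; rewrite /T; ring.
have sle : \sum_k T k <= 0.
  by apply: sumr_le0 => k _.
have cWu : c * (W *m u) j 0 <= 0 by apply: mulr_le0_ge0; [exact: ltW|exact: Wu].
have Wxj := Wx j.
have s0 : \sum_k T k = 0 by apply/eqP; rewrite eq_le sle sumT; lra.
split.
  have : c * (W *m u) j 0 = 0 by move: s0; rewrite sumT; lra.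
  by move/eqP; rewrite mulf_eq0 (lt_eqF cneg) /= => /eqP.
move=> k; rewrite inE => kJ.
have : - T k = 0.
  have := @psumr_eq0P _ _ xpredT (fun k => - T k).
  move=> /(_ _ _ k erefl); apply.
    by move=> l _; rewrite oppr_ge0.
  by rewrite sumrN s0 oppr0.
move/eqP; rewrite oppr_eq0 /T mulf_eq0 subr_eq0 (negPf kJ) orbF.
by move/eqP.
Qed.

Lemma inv_nonneg_of (R : realType) (n : nat) (W : 'M[R]_n) :
  (forall x : 'cV[R]_n, (forall i, 0 <= (W *m x) i 0) -> forall i, 0 <= x i 0) ->
  W \in unitmx /\ forall i j, 0 <= invmx W i j.
Proof.
move=> H.
have inj : forall x : 'cV[R]_n, W *m x = 0 -> x = 0.
  move=> x Wx0; apply/matrixP => i j; rewrite (ord1 j) !mxE; apply/eqP.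
  rewrite eq_le; apply/andP; split.
    have := H (- x); rewrite mulmxN Wx0 oppr0.
    have h0 : forall k, 0 <= (0 : 'cV[R]_n) k 0 by move=> k; rewrite mxE.
    by move=> /(_ h0 i); rewrite mxE oppr_ge0.
  by apply: H => k; rewrite Wx0 mxE.
have unitW : W \in unitmx.
  rewrite unitmxE unitfE -det_tr; apply/negP => /det0P [v vn0 vW].
  have : W *m v^T = 0 by rewrite -[W]trmxK -trmx_mul vW trmx0.
  move/inj => /eqP; rewrite -trmx0 (inj_eq (@trmx_inj _ _ _)).
  by rewrite (negPf vn0).
split=> // i j.
have := H (col j (invmx W)) _ i; rewrite mxE; apply.
move=> k; rewrite colE mulmxA mulmxV // mul1mx mxE; exact: ler0n.
Qed.
Lemma det_of_spec (R : realType) (n : nat) (s : R) (B : 'M[R]_n) :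
  gt_spectral_radius s B -> forall t, 0 <= t -> \det ((s%:M - B) + t%:M) != 0.
Proof.
move=> H t t0; apply/negP => /det0P [v vn0 vM].
have ev : eigenvalue B (s + t).
  apply/eigenvalueP; exists v => //.
  have E : (s%:M - B) + t%:M = (s + t)%:M - B :> 'M[R]_n.
    by rewrite raddfD /= addrAC.
  rewrite E in vM.
  move/eqP: vM; rewrite mulmxBr mul_mx_scalar subr_eq0.
  by move/eqP => <-.
move: ev; rewrite eigenvalue_root_char => /(rmorph_root (real_complex R)).
rewrite map_char_poly => /H.
rewrite /Normc.normc /= expr0n /= addr0 sqrtr_sqr => h.
have : s + t <= `|s + t| by exact: ler_norm.
lra.
Qed.
Lemma inv_limit (R : realType) (n : nat) (N : 'M[R]_n) (y : 'cV[R]_n) :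
  N \in unitmx ->
  (forall e, 0 < e -> exists z : 'cV[R]_n,
      (forall i, 0 <= z i 0) /\ (N + e%:M) *m z = y) ->
  forall i, 0 <= (invmx N *m y) i 0.
Proof.
move=> NU H i; set F := invmx N; set x := F *m y.
rewrite leNgt; apply/negP => xi.
pose S1 (z : 'cV[R]_n) : R := \sum_j `|z j 0|.
pose k : R := \sum_l \sum_j `|F l j|.
have S1ge : forall (z : 'cV[R]_n) (j : 'I_n), `|z j 0| <= S1 z.
  move=> z j; rewrite /S1 (bigD1 j) //= lerDl; apply: sumr_ge0 => l _.
  exact: normr_ge0.
have S1ge0 : forall z : 'cV[R]_n, 0 <= S1 z by move=> z; apply: sumr_ge0 => l _.
have k0 : 0 <= k by apply: sumr_ge0 => l _; apply: sumr_ge0.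
have Fz : forall (z : 'cV[R]_n) (l : 'I_n), `|(F *m z) l 0| <= (\sum_j `|F l j|) * S1 z.
  move=> z l; rewrite mxE mulr_suml; apply: le_trans (ler_norm_sum _ _ _) _.
  by apply: ler_sum => j _; rewrite normrM; apply: ler_wpM2l.
have S1F : forall z : 'cV[R]_n, S1 (F *m z) <= k * S1 z.
  by move=> z; rewrite /k mulr_suml; apply: ler_sum => l _; exact: Fz.
pose a := S1 x.
pose p := - x i 0.
have p0 : 0 < p by rewrite /p oppr_gt0.
have pa : p <= a by rewrite /p /a; apply: le_trans (S1ge x i); rewrite -normrN ler_norm.
pose e := p / (4 * (k + 1) * (a + 1)).
have e0 : 0 < e.
  rewrite /e divr_gt0 //; apply: mulr_gt0; [apply: mulr_gt0|]; lra.
have [z [z0 Ez]] := H e e0.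
have zeq : z = x - e *: (F *m z).
  have : x = z + e *: (F *m z).
    by rewrite /x -Ez mulmxA mulmxDr mulVmx // mul_mx_scalar mulmxDl mul1mx -scalemxAl.
  by move=> ->; rewrite addrK.
pose q := S1 z.
have Sz : q <= a + e * (k * q).
  have : q <= a + e * S1 (F *m z).
    rewrite /q /a /S1 mulr_sumr -big_split /=; apply: ler_sum => j _.
    rewrite {1}zeq !mxE; apply: le_trans (ler_normB _ _) _.
    by rewrite normrM (gtr0_norm e0).
  move=> h; apply: le_trans h _; rewrite lerD2l; apply: ler_wpM2l; [exact: ltW|].
  exact: S1F.
have xiz : p <= e * (k * q).
  have zi := z0 i.
  have : z i 0 = x i 0 - e * (F *m z) i 0 by rewrite {1}zeq !mxE.
  move=> zi'.
  have h1 : - (F *m z) i 0 <= S1 (F *m z).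
    apply: le_trans (S1ge _ i); rewrite -normrN; exact: ler_norm.
  have h2 : e * (- (F *m z) i 0) <= e * (k * q).
    apply: ler_wpM2l; [exact: ltW|]; apply: le_trans h1 _; exact: S1F.
  rewrite /p; lra.
have q0 : 0 <= q := S1ge0 z.
set c := e * k.
have c0 : 0 <= c by rewrite /c mulr_ge0 // ltW.
have c4 : 4 * c * (a + 1) <= p.
  have -> : 4 * c * (a + 1) = p * (k / (k + 1)).
    rewrite /c /e; field; apply/andP; split; apply/negP => /eqP; lra.
  rewrite ger_pMr // ler_pdivrMr; lra.
have Sz' : q <= a + c * q by rewrite /c -mulrA.
have xiz' : p <= c * q by rewrite /c -mulrA.
nra.
Qed.

Lemma mon_strict (R : realType) (n : nat) (W : 'M[R]_n) (u : 'cV[R]_n) :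
  Zmatrix W -> (forall i, 0 < u i 0) -> (forall i, 0 < (W *m u) i 0) ->
  W \in unitmx /\ forall i j, 0 <= invmx W i j.
Proof.
move=> Z up Wu; apply: inv_nonneg_of => x Wx; have Wu' : forall i, 0 <= (W *m u) i 0 by move=> i; exact: ltW (Wu i).
refine (zmx_pos Z up Wu' _ Wx).
move=> J /set0Pn [i iJ] /(_ i iJ) [h _]; have := Wu i; rewrite h; lra.
Qed.

Lemma Zmx_addscalar (R : realType) (n : nat) (M : 'M[R]_n) t :
  Zmatrix M -> Zmatrix (M + t%:M).
Proof. by move=> Z i j ij; rewrite !mxE (negPf ij) mulr0n addr0; exact: Z. Qed.

Lemma pos_of_det (R : realType) (n : nat) (M : 'M[R]_n) :
  Zmatrix M -> (forall t, 0 <= t -> \det (M + t%:M) != 0) ->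
  exists u : 'cV[R]_n, (forall i, 0 < u i 0) /\ forall i, 0 < (M *m u) i 0.
Proof.
move=> Z Hdet.
pose S := fun t : R => exists u : 'cV[R]_n,
  (forall i, 0 < u i 0) /\ forall i, 0 < ((M + t%:M) *m u) i 0.
have entry : forall t (u : 'cV[R]_n) i,
    ((M + t%:M) *m u) i 0 = (M *m u) i 0 + t * u i 0.
  by move=> t u i; rewrite mulmxDl mul_scalar_mx !mxE.
have up : forall t t', S t -> t <= t' -> S t'.
  move=> t t' [u [u0 Hu]] tt'; exists u; split => // i.
  have := Hu i; have := u0 i; rewrite !entry => h1 h2.
  have : t * u i 0 <= t' * u i 0 by apply: ler_wpM2r => //; exact: ltW.
  lra.
have big : S (1 + \sum_i \sum_j `|M i j|).
  exists (const_mx 1); split=> [i|i]; first by rewrite mxE ltr01.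
  rewrite entry !mxE mulr1.
  have h1 : - \sum_j M i j * (const_mx 1 : 'cV[R]_n) j 0 <= \sum_j `|M i j|.
    rewrite -sumrN; apply: ler_sum => j _; rewrite mxE mulr1 -normrN.
    exact: ler_norm.
  have h2 : \sum_j `|M i j| <= \sum_i \sum_j `|M i j|.
    rewrite [X in _ <= X](bigD1 i) //= lerDl; apply: sumr_ge0 => l _; apply: sumr_ge0 => *; exact: normr_ge0.
  lra.
have open : forall t, S t -> exists2 d, 0 < d & S (t - d).
  move=> t [u [u0 Hu]].
  pose w i := ((M + t%:M) *m u) i 0.
  pose sig := \sum_i u i 0 / w i.
  have sig0 : forall i, u i 0 / w i <= sig.
    move=> i; rewrite /sig (bigD1 i) //= lerDl; apply: sumr_ge0 => l _.
    by apply: divr_ge0; [exact: ltW (u0 l)|exact: ltW (Hu l)].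
  have sigp : 0 <= sig.
    by apply: sumr_ge0 => l _; apply: divr_ge0; [exact: ltW (u0 l)|exact: ltW (Hu l)].
  exists (1 / (1 + sig)); first by apply: divr_gt0 => //; lra.
  exists u; split => // i; rewrite entry.
  have wi : 0 < w i := Hu i.
  have := sig0 i; rewrite ler_pdivrMr // => h.
  have : 1 / (1 + sig) * u i 0 < w i.
    rewrite mul1r ltr_pdivrMl; last lra.
    have := u0 i; nra.
  rewrite /w entry; lra.
have [S0|S0n] := pselect (S 0).
  case: S0 => u [u0 Hu]; exists u; split => // i.
  by have := Hu i; rewrite entry mul0r addr0.
exfalso.
have Spos : forall t, S t -> 0 < t.
  move=> t St; rewrite ltNge; apply/negP => t0; apply: S0n; exact: up St t0.
have nE : classical_sets.nonempty S by exists (1 + \sum_i \sum_j `|M i j|).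
have lb0 : classical_sets.lbound S 0 by move=> t /Spos /ltW.
have hlb : classical_sets.has_lbound S by exists 0.
have hinf : classical_sets.has_inf S by split.
set ts := inf S.
have ts0 : 0 <= ts by apply: lb_le_inf.
have tsn : ~ S ts.
  move=> /open [d d0 Sd]; have := ge_inf hlb Sd; rewrite -/ts; lra.
have above : forall t, ts < t -> S t.
  move=> t tt; have e0 : 0 < t - ts by rewrite subr_gt0.
  have [e Se et] := inf_adherent e0 hinf.
  apply: up Se _; rewrite -/ts in et; apply: ltW; lra.
pose N := M + ts%:M.
have NU : N \in unitmx by rewrite unitmxE unitfE; exact: Hdet.
have Fnn : forall i j, 0 <= invmx N i j.
  move=> i j; have := @inv_limit R n N (delta_mx j 0) NU _ i.
  rewrite -colE mxE; apply.
  move=> e e0; have [u [u0 Hu]] := above (ts + e) ltac:(lra).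
  have [WU Wnn] := mon_strict (Zmx_addscalar (ts + e) Z) u0 Hu.
  exists (invmx (M + (ts + e)%:M) *m delta_mx j 0); split.
    by move=> l; rewrite -colE mxE.
  by rewrite /N -addrA -raddfD /= mulmxA mulmxV // mul1mx.
apply: tsn; exists (invmx N *m const_mx 1); split => i.
  rewrite mxE lt_neqAle; apply/andP; split; last first.
    by apply: sumr_ge0 => j _; rewrite mxE mulr1.
  apply/negP => /eqP h.
  have h0 : forall j, invmx N i j = 0.
    have nn : forall l, xpredT l -> 0 <= invmx N i l * (const_mx 1 : 'cV[R]_n) l 0.
      by move=> l _; rewrite mxE mulr1.
    move=> j; have := @psumr_eq0P _ _ xpredT _ nn (esym h) j erefl.
    by rewrite mxE mulr1.
  have : (invmx N *m N) i i = 1 by rewrite mulVmx // mxE eqxx.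
  rewrite mxE big1 ?oner_eq0 //; last by move=> j _; rewrite h0 mul0r.
  by move=> /esym /eqP; rewrite oner_eq0.
by rewrite mulmxA mulmxV // mul1mx mxE ltr01.
Qed.
Lemma reducible_of (R : realType) (n : nat) (M : 'M[R]_n) (J : {set 'I_n}) :
  J != set0 -> J != setT ->
  (forall i j, i \in J -> j \notin J -> M j i = 0) -> reducible M.
Proof.
move=> J0 JT H.
pose t := enum J ++ enum (~: J).
have st : size t = n by rewrite size_cat -!cardE cardsC card_ord.
have ut : uniq t.
  rewrite cat_uniq !enum_uniq andbT /=; apply/hasPn => x.
  by rewrite !mem_enum inE.
pose f (p : 'I_n) := nth p t p.
have fE : forall p q : 'I_n, f p = nth q t p.
  by move=> p q; apply: set_nth_default; rewrite st.
have finj : injective f.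
  move=> p q; rewrite (fE p q) /f => /eqP; rewrite nth_uniq ?st // => /eqP.
  exact: val_inj.
pose sg := perm finj.
have CJ : ~: J != set0.
  apply/negP => /eqP h; move/negP: JT; apply; apply/eqP.
  by rewrite -[J]setCK h setC0.
have cJ : (#|J| < n)%N.
  have := cardsC J; rewrite card_ord => E.
  have : (0 < #|~: J|)%N by rewrite card_gt0.
  lia.
exists (sg^-1)%g, #|J|; split.
  by rewrite card_gt0 J0 cJ.
move=> i j ki jk.
rewrite tr_perm_mx invgK -row_permE -col_permE !mxE !permE.
apply: H.
  rewrite /f nth_cat -cardE jk.
  have : nth j (enum J) j \in enum J by apply: mem_nth; rewrite -cardE.
  by rewrite mem_enum.
rewrite /f nth_cat -cardE ltnNge ki /=.
have : nth i (enum (~: J)) (i - #|J|) \in enum (~: J).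
  apply: mem_nth; rewrite -cardE.
  have := cardsC J; rewrite card_ord => E; have := ltn_ord i.
  by move=> iN; rewrite ltn_subLR // E.
by rewrite mem_enum inE.
Qed.
Definition monP (R : realType) (n : nat) (N : 'M[R]_n) :=
  N \in unitmx /\ forall i j, 0 <= invmx N i j.

Lemma monP_pos (R : realType) (n : nat) (N : 'M[R]_n) (y : 'cV[R]_n) :
  monP N -> (forall i, 0 <= (N *m y) i 0) -> forall i, 0 <= y i 0.
Proof.
move=> [NU Nn] H i; rewrite -(mulKmx NU y) mxE; apply: sumr_ge0 => j _.
exact: mulr_ge0.
Qed.

Lemma sg_cases (R : realType) (a : R) :
  (0 < a /\ Num.sg a = 1) \/ (a = 0 /\ Num.sg a = 0) \/ (a < 0 /\ Num.sg a = -1).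
Proof.
case: (ltrgt0P a) => h.
- by left; split => //; rewrite gtr0_sg.
- by right; right; split => //; rewrite ltr0_sg.
- by right; left; rewrite h sgr0.
Qed.

Lemma Dsign_mul (R : realType) (n : nat) (x y : 'cV[R]_n) i :
  (Dsign x *m y) i 0 = Num.sg (x i 0) * y i 0.
Proof. by rewrite /Dsign mul_diag_mx !mxE. Qed.

Lemma Dsign_abs (R : realType) (n : nat) (x : 'cV[R]_n) : Dsign x *m x = absv x.
Proof.
by apply/matrixP => i j; rewrite (ord1 j) Dsign_mul /absv mxE -normrEsg.
Qed.

Section Newton.
Variables (R : realType) (n : nat) (A : 'M[R]_n) (b x0 : 'cV[R]_n).
Variable allowed : 'cV[R]_n -> Prop.
Variable m : nat.
Hypothesis Hmon : forall x, allowed x -> monP (A - Dsign x).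
Hypothesis Hstay : forall x, allowed x -> allowed (invmx (A - Dsign x) *m b).
Hypothesis Hcard : forall x, allowed x -> (#|[set j | (0 < x j 0)%R]| <= m)%N.
Hypothesis H0 : allowed x0.

Local Notation gn := (gnewton A b x0).

Lemma gn_allowed k : allowed (gn k).
Proof. by elim: k => //= k IH; apply: Hstay. Qed.

Lemma gn_eq k : (A - Dsign (gn k)) *m gn k.+1 = b.
Proof.
have [U _] := Hmon (gn_allowed k).
by rewrite /= mulmxA mulmxV // mul1mx.
Qed.

Lemma gn_diff k i :
  ((A - Dsign (gn k.+1)) *m (gn k.+2 - gn k.+1)) i 0 =
  Num.sg (gn k.+1 i 0) * gn k.+1 i 0 - Num.sg (gn k i 0) * gn k.+1 i 0.
Proof.
have e1 := gn_eq k; have e2 := gn_eq k.+1.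
have h : forall P Q : 'cV[R]_n, (P - Q) i 0 = P i 0 - Q i 0.
  by move=> P Q; rewrite !mxE.
rewrite mulmxBr e2 -[X in X - _]e1 mulmxBl mulmxBl !h !Dsign_mul.
set a := (A *m _) i 0; ring.
Qed.

Lemma gn_mono k i : gn k.+1 i 0 <= gn k.+2 i 0.
Proof.
rewrite -subr_ge0.
have -> : gn k.+2 i 0 - gn k.+1 i 0 = (gn k.+2 - gn k.+1) i 0 by rewrite !mxE.
apply: (@monP_pos _ _ _ (gn k.+2 - gn k.+1) (Hmon (gn_allowed k.+1))) => l.
rewrite gn_diff.
have := normr_sg (gn k l 0); have := ler_norm (Num.sg (gn k l 0) * gn k.+1 l 0).
rewrite normrM -normrEsg => h1 h2.
have : `|Num.sg (gn k l 0)| <= 1 by rewrite h2; case: (_ != 0).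
move=> h3; have : `|Num.sg (gn k l 0)| * `|gn k.+1 l 0| <= `|gn k.+1 l 0|.
  by rewrite -[X in _ <= X]mul1r; apply: ler_wpM2r => //; exact: normr_ge0.
lra.
Qed.

Lemma gn_stop k : (forall i, 0 < gn k.+2 i 0 -> 0 < gn k.+1 i 0) -> gn k.+3 = gn k.+2.
Proof.
move=> H.
have [U _] := Hmon (gn_allowed k.+2).
have z : (A - Dsign (gn k.+2)) *m (gn k.+3 - gn k.+2) = 0.
  apply/matrixP => i j; rewrite (ord1 j) gn_diff [RHS]mxE.
  have mo := gn_mono k i.
  case: (sg_cases (gn k.+2 i 0)) => [[h ->]|[[h ->]|[h ->]]].
  - by rewrite gtr0_sg ?subrr //; apply: H.
  - by rewrite h !mulr0 subrr.
  - by rewrite ltr0_sg ?subrr //; apply: le_lt_trans mo h.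
apply/eqP; rewrite -subr_eq0; apply/eqP.
by rewrite -(mulKmx U (gn k.+3 - gn k.+2)) z mulmx0.
Qed.

Lemma gn_stab j : gn j.+1 = gn j -> forall l, gn (j + l) = gn j.
Proof.
move=> E; elim=> [|l IH]; first by rewrite addn0.
by rewrite addnS /= IH; exact: E.
Qed.

Local Notation E k := [set j | (0 < gn k j 0)%R].

Lemma gn_grow k : gn k.+3 != gn k.+2 -> (#|E k.+1| < #|E k.+2|)%N.
Proof.
move=> ne; apply: proper_card; rewrite properE; apply/andP; split.
  apply/subsetP => i; rewrite !inE => h; apply: lt_le_trans h (gn_mono k i).
apply/negP => /subsetP sub; move/eqP: ne; apply; apply: gn_stop => i h.
by have := sub i; rewrite !inE; apply.
Qed.

Lemma gn_final : gn m.+3 = gn m.+2 /\ forall k, (m.+2 <= k)%N -> gn k = gn m.+2.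
Proof.
have st : gn m.+3 = gn m.+2.
  apply/eqP; apply/negPn/negP => ne.
  have claim : forall j, (j <= m.+1)%N -> (j <= #|E j.+1|)%N.
    elim=> [|j IH] hj; first by [].
    have nej : gn j.+3 != gn j.+2.
      apply/negP => /eqP e; move/eqP: ne; apply.
      have e1 := gn_stab e (m - j); have e2 := gn_stab e (m.+1 - j).
      have h1 : (j.+2 + (m - j) = m.+2)%N by lia.
      have h2 : (j.+2 + (m.+1 - j) = m.+3)%N by lia.
      rewrite h1 in e1; rewrite h2 in e2; exact: (etrans e2 (esym e1)).
    have := gn_grow nej; have := IH (ltnW hj); lia.
  have := claim m.+1 (leqnn _); have := Hcard (gn_allowed m.+2); lia.
split; first exact: st.
move=> k hk; have := gn_stab st (k - m.+2); rewrite subnKC //.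
Qed.
End Newton.


Lemma Mmx_u (R : realType) (n : nat) (M : 'M[R]_n) :
  nonsingular_Mmatrix M ->
  exists u : 'cV[R]_n, (forall i, 0 < u i 0) /\ forall i, 0 < (M *m u) i 0.
Proof.
case=> Z [s [B [_ [EM H]]]]; apply: pos_of_det => // t t0.
by rewrite EM; apply: det_of_spec.
Qed.

Lemma AD_entry (R : realType) (n : nat) (A : 'M[R]_n) (d : 'rV[R]_n) (u : 'cV[R]_n) i :
  ((A - diag_mx d) *m u) i 0 = ((A - 1%:M) *m u) i 0 + (1 - d 0 i) * u i 0.
Proof.
rewrite !mulmxBl mul_diag_mx mul1mx.
have h : forall P Q : 'cV[R]_n, (P - Q) i 0 = P i 0 - Q i 0 by move=> P Q; rewrite !mxE.
rewrite !h [(\matrix_(i, j) _) i 0]mxE; ring.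
Qed.

Lemma AD_off (R : realType) (n : nat) (A : 'M[R]_n) (d : 'rV[R]_n) i j :
  i != j -> (A - diag_mx d) i j = (A - 1%:M) i j.
Proof. by move=> ij; rewrite !mxE (negPf ij) !mulr0n. Qed.

Lemma AD_Z (R : realType) (n : nat) (A : 'M[R]_n) (d : 'rV[R]_n) :
  Zmatrix (A - 1%:M) -> Zmatrix (A - diag_mx d).
Proof. by move=> Z i j ij; rewrite AD_off //; exact: Z. Qed.

Lemma monA (R : realType) (n : nat) (A : 'M[R]_n) (u : 'cV[R]_n) :
  Zmatrix (A - 1%:M) -> (forall i, 0 < u i 0) -> (forall i, 0 < ((A - 1%:M) *m u) i 0) ->
  forall d : 'rV[R]_n, (forall i, d 0 i <= 1) -> monP (A - diag_mx d).
Proof.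
move=> Z u0 Hu d d1; apply: (mon_strict (AD_Z d Z) u0) => i.
rewrite AD_entry; have := Hu i; have := d1 i; have := u0 i; nra.
Qed.

Lemma monB (R : realType) (n : nat) (A : 'M[R]_n) (v : 'cV[R]_n) :
  Zmatrix (A - 1%:M) -> irreducible (A - 1%:M) ->
  (forall i, 0 < v i 0) -> (A^T - 1%:M) *m v = 0 ->
  forall d : 'rV[R]_n, (forall i, d 0 i <= 1) -> (exists i, d 0 i < 1) ->
  monP (A - diag_mx d).
Proof.
move=> Z Irr v0 Hv d d1 [i0 di0].
pose W := (A - diag_mx d)^T.
have WE : W = A^T - diag_mx d by rewrite /W linearB /= tr_diag_mx.
have Wv : forall i, (W *m v) i 0 = (1 - d 0 i) * v i 0.
  by move=> i; rewrite WE AD_entry Hv mxE add0r.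
have [WU Wn] : W \in unitmx /\ forall i j, 0 <= invmx W i j.
  apply: inv_nonneg_of => x Wx; apply: (zmx_pos _ v0 _ _ Wx).
  - move=> i j ij; rewrite /W mxE AD_off; first by apply: Z; rewrite eq_sym.
    by rewrite eq_sym.
  - move=> i; rewrite Wv; have := d1 i; have := v0 i; nra.
  move=> J J0 HJ.
  have [JT|JT] := eqVneq J setT.
    have := HJ i0; rewrite JT inE => /(_ erefl) [h _].
    move: h; rewrite Wv => /eqP; rewrite mulf_eq0 => /orP [] /eqP; 
      [have := di0; lra | have := v0 i0; lra].
  apply: Irr; apply: (reducible_of J0 JT) => i j iJ jJ.
  have [_ h] := HJ i iJ; have := h j jJ; rewrite /W mxE AD_off //.
  by apply/negP => /eqP e; rewrite e iJ in jJ.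
split; first by rewrite -unitmx_tr.
move=> i j; have := Wn j i; rewrite /W -trmx_inv mxE //.
Qed.

Lemma vpos_contra (R : realType) (n : nat) (A : 'M[R]_n) (b v : 'cV[R]_n) :
  (A^T - 1%:M) *m v = 0 -> (forall i, 0 < v i 0) -> (v^T *m b) 0 0 < 0 ->
  forall (d : 'rV[R]_n) (q : 'cV[R]_n), (forall i, d 0 i <= 1) ->
  (forall i, 0 <= q i 0) -> (A - diag_mx d) *m q = b -> False.
Proof.
move=> Hv v0 vb d q d1 q0 Hq.
have : 0 <= (v^T *m b) 0 0; last lra.
rewrite -Hq mulmxA.
have -> : v^T *m (A - diag_mx d) = ((A^T - diag_mx d) *m v)^T.
  have e : (A^T - diag_mx d)^T = A - diag_mx d.
    by rewrite [LHS](raddfB (@trmx _ n n)) /= trmxK tr_diag_mx.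
  by rewrite trmx_mul e.
rewrite mxE; apply: sumr_ge0 => i _; rewrite mxE AD_entry Hv mxE add0r.
apply: mulr_ge0 => //; have := d1 i; have := v0 i; nra.
Qed.

Definition dvec (R : realType) (n : nat) (y z : 'cV[R]_n) : 'rV[R]_n :=
  \row_i (if y i 0 == z i 0 then 0 else (`|y i 0| - `|z i 0|) / (y i 0 - z i 0)).

Lemma dvec_le1 (R : realType) (n : nat) (y z : 'cV[R]_n) i : dvec y z 0 i <= 1.
Proof.
rewrite mxE; case: eqP => [_|ne]; first exact: ler01.
have := lerB_dist (y i 0) (z i 0); have := lerB_dist (z i 0) (y i 0).
rewrite distrC => h1 h2.
case: (ltrgt0P (y i 0 - z i 0)) => h.
- by rewrite ler_pdivrMr // mul1r -(gtr0_norm h).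
- rewrite ler_ndivrMr // mul1r; rewrite (ltr0_norm h) in h1; lra.
- by move/eqP: h; rewrite subr_eq0 => /eqP.
Qed.

Lemma dvec_eq (R : realType) (n : nat) (y z : 'cV[R]_n) :
  diag_mx (dvec y z) *m (y - z) = absv y - absv z.
Proof.
apply/matrixP => i j; rewrite (ord1 j) mul_diag_mx !mxE.
case: eqP => [e|ne]; first by rewrite e !subrr mul0r.
by rewrite divfK // subr_eq0; apply/eqP.
Qed.

Lemma uniq_sol (R : realType) (n : nat) (A : 'M[R]_n) (b : 'cV[R]_n)
  (P : 'rV[R]_n -> Prop) :
  (forall d : 'rV[R]_n, (forall i, d 0 i <= 1) -> P d -> monP (A - diag_mx d)) ->
  forall y z : 'cV[R]_n, is_AVE_solution A b y -> is_AVE_solution A b z ->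
  P (dvec y z) -> y = z.
Proof.
move=> H y z Hy Hz Pd.
have [U _] := H _ (dvec_le1 y z) Pd.
have : (A - diag_mx (dvec y z)) *m (y - z) = 0.
  rewrite mulmxBl dvec_eq mulmxBr.
  move: Hy Hz; rewrite /is_AVE_solution => Hy Hz.
  have Hy' : A *m y = b + absv y by rewrite -Hy subrK.
  have Hz' : A *m z = b + absv z by rewrite -Hz subrK.
  rewrite Hy' Hz'; apply/matrixP => i j; rewrite !mxE; ring.
move=> h; apply/eqP; rewrite -subr_eq0; apply/eqP.
by rewrite -(mulKmx U (y - z)) h mulmx0.
Qed.

Lemma sg_le1 (R : realType) (n : nat) (x : 'cV[R]_n) i :
  (\row_i Num.sg (x i 0)) 0 i <= 1.
Proof. by rewrite mxE; case: (sg_cases (x i 0)) => [[_ ->]|[[_ ->]|[_ ->]]]; lra. Qed.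

Lemma fix_sol (R : realType) (n : nat) (A : 'M[R]_n) (b x : 'cV[R]_n) :
  (A - Dsign x) \in unitmx -> invmx (A - Dsign x) *m b = x -> is_AVE_solution A b x.
Proof.
move=> U e.
have h : (A - Dsign x) *m (invmx (A - Dsign x) *m b) = b.
  by rewrite mulmxA mulmxV // mul1mx.
by rewrite e in h; rewrite /is_AVE_solution -Dsign_abs -mulmxBl.
Qed.

Lemma sol_neg (R : realType) (n : nat) (A : 'M[R]_n) (b v : 'cV[R]_n) :
  (A^T - 1%:M) *m v = 0 -> (forall i, 0 < v i 0) -> (v^T *m b) 0 0 < 0 ->
  forall y, is_AVE_solution A b y -> exists i, y i 0 < 0.
Proof.
move=> Hv v0 vb y Hy.
case: (boolP [exists i, y i 0 < 0]) => [/existsP //|/existsPn h].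
exfalso.
have y0 : forall i, 0 <= y i 0 by move=> i; have := h i; rewrite -leNgt.
apply: (vpos_contra Hv v0 vb (d := const_mx 1) (q := y)) => //.
  by move=> i; rewrite mxE.
rewrite diag_const_mx mulmxBl mul1mx.
rewrite -Hy; congr (_ - _); apply/matrixP => i j.
by rewrite (ord1 j) mxE ger0_norm.
Qed.

Lemma dvec_lt1 (R : realType) (n : nat) (y z : 'cV[R]_n) i :
  y i 0 < 0 -> dvec y z 0 i < 1.
Proof.
move=> yi; rewrite mxE; case: eqP => [_|ne]; first exact: ltr01.
rewrite (ltr0_norm yi).
case: (ltrgt0P (y i 0 - z i 0)) => h.
- rewrite ltr_pdivrMr // mul1r.
  have zi : z i 0 < 0 by lra.
  rewrite (ltr0_norm zi); lra.
- rewrite ltr_ndivrMr // mul1r.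
  case: (lerP 0 (z i 0)) => zi; first by rewrite (ger0_norm zi); lra.
  rewrite (ltr0_norm zi); lra.
- by move/eqP: h; rewrite subr_eq0 => /eqP.
Qed.

Lemma partA (R : realType) (n : nat) (A : 'M[R]_n) (b : 'cV[R]_n) :
  nonsingular_Mmatrix (A - 1%:M) ->
  forall x0 : 'cV[R]_n,
     gnewton_well_defined A b x0 /\
     exists xs : 'cV[R]_n,
       (is_AVE_solution A b xs /\
        forall y, is_AVE_solution A b y -> y = xs) /\
       forall k, (n.+2 <= k)%N -> gnewton A b x0 k = xs.
Proof.
move=> Hns x0.
have [u [u0 Hu]] := Mmx_u Hns.
have Z : Zmatrix (A - 1%:M) by case: Hns.
have mA := monA Z u0 Hu.
have Hmon : forall x : 'cV[R]_n, True -> monP (A - Dsign x).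
  by move=> x _; exact: (mA _ (sg_le1 x)).
have Hcard : forall x : 'cV[R]_n, True -> (#|[set j | (0 < x j 0)%R]| <= n)%N.
  by move=> x _; rewrite -[X in (_ <= X)%N]card_ord; exact: max_card.
have [st fin] := @gn_final R n A b x0 (fun _ => True) n Hmon (fun _ _ => I) Hcard I.
split; first by move=> k; exact: (Hmon _ I).1.
exists (gnewton A b x0 n.+2); split; last exact: fin.
have sol : is_AVE_solution A b (gnewton A b x0 n.+2).
  exact: (fix_sol (Hmon _ I).1 st).
split; first exact: sol.
move=> y Hy.
have mA' : forall d : 'rV[R]_n, (forall i, d 0 i <= 1) -> True -> monP (A - diag_mx d).
  by move=> d d1 _; exact: mA d d1.
exact: (@uniq_sol R n A b (fun _ => True) mA' y _ Hy sol I).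
Qed.

Lemma partB (R : realType) (n : nat) (A : 'M[R]_n) (b : 'cV[R]_n) :
  (forall v : 'cV[R]_n,
     singular_Mmatrix (A - 1%:M) -> irreducible (A - 1%:M) ->
     (forall i, 0 < v i 0) -> (A^T - 1%:M) *m v = 0 ->
     (v^T *m b) 0 0 < 0 ->
   forall x0 : 'cV[R]_n, Dsign x0 != 1%:M ->
     gnewton_well_defined A b x0 /\
     exists xs : 'cV[R]_n,
       (is_AVE_solution A b xs /\
        forall y, is_AVE_solution A b y -> y = xs) /\
       forall k, (n.+1 <= k)%N -> gnewton A b x0 k = xs).
Proof.
move=> v Hsing Irr v0 Hv vb x0 Dx0.
have Z : Zmatrix (A - 1%:M) by case: Hsing.
have mB := monB Z Irr v0 Hv.
pose allowed (x : 'cV[R]_n) := exists i, x i 0 <= 0.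
have Hmon : forall x : 'cV[R]_n, allowed x -> monP (A - Dsign x).
  move=> x [i xi]; apply: (mB _ (sg_le1 x)); exists i.
  rewrite mxE; have : Num.sg (x i 0) <= 0 by rewrite sgr_le0.
  lra.
have Hstay : forall x, allowed x -> allowed (invmx (A - Dsign x) *m b).
  move=> x ax; set q := invmx (A - Dsign x) *m b.
  case: (boolP [exists i, q i 0 <= 0]) => [/existsP //|/existsPn h].
  exfalso; have [U _] := Hmon x ax.
  apply: (vpos_contra Hv v0 vb (sg_le1 x) (q := q)).
    by move=> i; have := h i; rewrite -ltNge => /ltW.
  by rewrite /q mulmxA mulmxV // mul1mx.
have Hcard : forall x, allowed x ->
    (#|[set j | (0 < x j 0)%R]| <= n.-1)%N.
  move=> x [i xi].
  have : [set j | (0 < x j 0)%R] \proper [set: 'I_n].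
    rewrite properT; apply/negP => /eqP e.
    have : i \in [set j | (0 < x j 0)%R] by rewrite e inE.
    by rewrite inE ltNge xi.
  move/proper_card; rewrite cardsT card_ord; lia.
have H0 : allowed x0.
  case: (boolP [exists i, x0 i 0 <= 0]) => [/existsP //|/existsPn h].
  exfalso; move/eqP: Dx0; apply; apply/matrixP => i j.
  rewrite /Dsign !mxE gtr0_sg //; have := h i; rewrite -ltNge.
  by [].
have n0 : (0 < n)%N by case: H0 => i _; exact: (leq_ltn_trans (leq0n i) (ltn_ord i)).
have [st fin] := @gn_final R n A b x0 allowed n.-1 Hmon Hstay Hcard H0.
have hn : (n.-1.+2 = n.+1)%N by lia.
rewrite hn in st fin.
have Hal := gn_allowed Hstay H0.
split; first by move=> k; exact: (Hmon _ (Hal k)).1.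
exists (gnewton A b x0 n.+1); split; last exact: fin.
have sol : is_AVE_solution A b (gnewton A b x0 n.+1).
  exact: (fix_sol (Hmon _ (Hal n.+1)).1 st).
split; first exact: sol.
move=> y Hy.
have [i yi] := sol_neg Hv v0 vb Hy.
have Pd : exists i, dvec y (gnewton A b x0 n.+1) 0 i < 1.
  by exists i; exact: dvec_lt1.
exact: (@uniq_sol R n A b (fun d => exists i, d 0 i < 1) mB y _ Hy sol Pd).
Qed.

Unset Implicit Arguments.

Theorem theorem4p2 (R : realType) (n : nat) (A : 'M[R]_n) (b : 'cV[R]_n) :
  (* (a) *)
  (nonsingular_Mmatrix (A - 1%:M) ->
   forall x0 : 'cV[R]_n,
     gnewton_well_defined A b x0 /\
     exists xs : 'cV[R]_n,
       (is_AVE_solution A b xs /\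
        forall y, is_AVE_solution A b y -> y = xs) /\
       forall k, (n.+2 <= k)%N -> gnewton A b x0 k = xs)
  /\
  (* (b) *)
  (forall v : 'cV[R]_n,
     singular_Mmatrix (A - 1%:M) -> irreducible (A - 1%:M) ->
     (forall i, 0 < v i 0) -> (A^T - 1%:M) *m v = 0 ->
     (v^T *m b) 0 0 < 0 ->
   forall x0 : 'cV[R]_n, Dsign x0 != 1%:M ->
     gnewton_well_defined A b x0 /\
     exists xs : 'cV[R]_n,
       (is_AVE_solution A b xs /\
        forall y, is_AVE_solution A b y -> y = xs) /\
       forall k, (n.+1 <= k)%N -> gnewton A b x0 k = xs).
Proof.
split; [exact: partA | exact: partB].
Qed.
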